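(* Let $\rho \in [\frac{1}{2},1)$. The running time of $\mathrm{BasketSort}(S, w_S)$ with shrinking rate $\rho$, on a sequence $S$ of $m$ elements with $1 \le w_S \le m$, is $O\left(\frac{m \cdot w_S}{1-\rho}\right)$.
   Context: Algorithm BasketSort$(S,w_S)$ with shrinking rate $\rho$: set $S_{\lfloor w_S\rfloor} = S$ and $w = \lfloor w_S \rfloor$. While $w \ge 1$: partition the current sequence $S_w$ into $\lceil m/w \rceil$ baskets $B_1, B_2,\dots$ of consecutive elements, each of the first $\lceil m/w\rceil - 1$ having exactly $w$ elements and the last at most $w$; for each $i$, let $B = \bigcup_{j=\max\{1,i-3\}}^{\min\{i+3,\lceil m/w\rceil\}} B_j$, for each $x\in B$ let $\mathrm{score}(x)$ be the number of $y \in B\setminus\{x\}$ such that the (noisy) comparison reports $y$ smaller than $x$, let $A$ be $B$ stably sorted in non-decreasing order of score, and for each $x \in B_i$ set $\tau_w(x) = \max\{0,i-4\}\cdot w + \mathrm{pos}(x,A)$ (position of $x$ in $A$); then let $S_{\lfloor \rho w\rfloor}$ be $S_w$ stably sorted in non-decreasing order of $\tau_w$, and set $w \leftarrow \lfloor \rho w \rfloor$. Return $S_0$. Each comparison takes constant time. *)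

(* Defs.v *)
From mathcomp Require Import all_boot all_order all_algebra.
Set Implicit Arguments. Unset Strict Implicit. Unset Printing Implicit Defensive.
Import Order.TTheory GRing.Theory Num.Theory.

(* Elements are tagged with their
   position in the current sequence S_w.  The (noisy) comparison oracle is an
   arbitrary function [q : nat -> T -> T -> bool]: [q t y x] is the answer of the
   t-th comparison query "is y reported smaller than x?", so answers may be
   arbitrary/inconsistent (adversarial noise).  The returned cost counts
   elementary unit-time steps:
     - one unit per comparison,
     - |B| units per window B (computing scores and stably sorting B by score,
       e.g. by counting sort, scores lie in [0,|B|)),
     - m + 1 units per round (partitioning, computing the tau_w, and stably
       sorting S_w by tau_w, e.g. by counting sort, tau_w lies in [1, m+O(w)]). *)

Section BasketSort.
Variable T : Type.
Variable q : nat -> T -> T -> bool.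

Fixpoint score_one (t : nat) (x : nat * T) (ys : seq (nat * T)) : nat * nat :=
  match ys with
  | [::] => (0, t)
  | y :: ys' =>
      if y.1 == x.1 then score_one t x ys'
      else let: (sc, t') := score_one t.+1 x ys' in (sc + q t y.2 x.2, t')
  end.

Fixpoint scores (t : nat) (xs win : seq (nat * T)) : seq ((nat * T) * nat) * nat :=
  match xs with
  | [::] => ([::], t)
  | x :: xs' =>
      let: (sc, t1) := score_one t x win in
      let: (rest, t2) := scores t1 xs' win in
      ((x, sc) :: rest, t2)
  end.

Definition round (t : nat) (s : seq T) (w : nat) : seq T * nat * nat :=
  let m := size s in
  let sidx := zip (iota 0 m) s in
  let k := (m + w.-1) %/ w in
  let step (acc : seq ((nat * T) * nat) * nat * nat) (i : nat) :=
    let: (taus, t0, c0) := acc in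
    let lo := (i - 3) * w in                 (* = max{0, i-3} * w, 0-indexed i *)
    let hi := minn ((i + 4) * w) m in
    let win := take (hi - lo) (drop lo sidx) in
    let: (sc, t1) := scores t0 win win in
    let A := sort (fun a b : (nat * T) * nat => a.2 <= b.2) sc in
    let posA (x : nat * T) := (find (fun a : (nat * T) * nat => a.1.1 == x.1) A).+1 in
    let bsk := take (minn ((i + 1) * w) m - i * w) (drop (i * w) sidx) in
    (taus ++ [seq (x, lo + posA x) | x <- bsk], t1, c0 + (t1 - t0) + size win) in
  let: (taus, t', c) := foldl step ([::], t, 0) (iota 0 k) in
  ([seq a.1.2 | a <- sort (fun a b : (nat * T) * nat => a.2 <= b.2) taus], t', c + m + 1).

(* the loop "while w >= 1", with next width [nxt w] = floor (rho w);
   [fuel] bounds the number of rounds *)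
Fixpoint bs_loop (nxt : nat -> nat) (fuel t : nat) (s : seq T) (w cost : nat)
  : seq T * nat :=
  match fuel with
  | 0 => (s, cost)
  | f.+1 =>
      if w == 0 then (s, cost)
      else let: (s', t', c) := round t s w in bs_loop nxt f t' s' (nxt w) (cost + c)
  end.
End BasketSort.

(* BasketSort(S, w_S) with shrinking rate rho: returns (S_0, running time).
   The fuel floor(w_S)+1 suffices since floor(rho w) < w for rho < 1, w >= 1. *)
Definition basket_sort {R : archiRealFieldType} (rho : R) (T : Type)
  (q : nat -> T -> T -> bool) (S : seq T) (wS : R) : seq T * nat :=
  let w0 := Num.truncn wS in
  bs_loop q (fun w => Num.truncn (rho * w%:R)) w0.+1 0 S w0 0.

Definition basket_sort_time {R : archiRealFieldType} (rho : R) (T : Type)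
  (q : nat -> T -> T -> bool) (S : seq T) (wS : R) : nat :=
  (basket_sort rho q S wS).2.

(* Main.v *)
Require Import Defs.
From mathcomp Require Import all_boot all_order all_algebra.
From mathcomp Require Import zify ring lra.
Import Order.TTheory GRing.Theory Num.Theory.

Lemma score_one_le {T} q t (x : nat * T) ys : (score_one q t x ys).2 <= t + size ys.
Proof.
elim: ys t => [|y ys IH] t /=; first by rewrite addn0.
case: ifP => _; first by have := IH t; lia.
have := IH t.+1; case: (score_one q t.+1 x ys) => sc t' /=; lia.
Qed.

Lemma scores_le {T} q t (xs win : seq (nat * T)) :
  (scores q t xs win).2 <= t + size xs * size win.
Proof.
elim: xs t => [|x xs IH] t /=; first by rewrite addn0.
have := score_one_le q t x win; case: (score_one q t x win) => sc t1 /= H1.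
have := IH t1; case: (scores q t1 xs win) => r t2 /= H2.
rewrite mulSn; lia.
Qed.

Lemma round_bound {T} q t (s : seq T) w M :
  0 < w -> w <= M -> size s <= M ->
  size (round q t s w).1.1 <= size s /\ (round q t s w).2 <= 114 * M * w.
Proof.
move=> w0 wM sM.
rewrite /round.
set m := size s.
set sidx := zip _ _.
have szs : size sidx = m by rewrite size_zip size_iota minnn.
set k := (m + w.-1) %/ w.
set step := fun acc i => _.
have Hstep : forall acc i, size (step acc i).1.1 =
   size acc.1.1 + minn (minn ((i + 1) * w) m - i * w) (m - i * w) /\
   (step acc i).2 <= acc.2 + (49 * w * w + 7 * w).
  move=> [[taus t0] c0] i; rewrite /step.
  set win := take _ _.
  have Hw : size win <= 7 * w.
    rewrite /win size_take_min size_drop szs.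
    have : minn ((i + 4) * w) m <= (i + 4) * w by apply: geq_minl.
    have : (i + 4) - (i - 3) <= 7 by lia.
    nia.
  have := scores_le q t0 win win; case: (scores q t0 win win) => sc t1 /= Hs.
  rewrite size_cat size_map size_take_min size_drop szs; split => //.
  nia.
have Hinv : forall n, size (foldl step ([::], t, 0) (iota 0 n)).1.1 <= minn (n * w) m /\
   (foldl step ([::], t, 0) (iota 0 n)).2 <= n * (49 * w * w + 7 * w).
  elim=> [|n [IH1 IH2]]; first by rewrite /= min0n.
  have -> : iota 0 n.+1 = iota 0 n ++ [:: n] by rewrite -addn1 iotaD.
  rewrite foldl_cat /=.
  case: (Hstep (foldl step ([::], t, 0) (iota 0 n)) n) => H1 H2.
  rewrite H1; split; last by rewrite !mulSn; lia.
  rewrite !mulSn; lia.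
have := Hinv k.
case: (foldl step ([::], t, 0) (iota 0 k)) => [[taus t'] c] /= [H1 H2].
rewrite size_map size_sort; split; first lia.
have Hk : k * w <= m + w.-1 by apply: leq_trunc_div.
nia.
Qed.

Lemma loop_bound (R : archiRealFieldType) (rho : R) (hr0 : (0 <= rho)%R) (hr1 : (rho < 1)%R)
  {T} (q : nat -> T -> T -> bool) (M : nat) :
  forall fuel t (s : seq T) w cost, size s <= M -> w <= M ->
  ((bs_loop q (fun w => Num.truncn (rho * w%:R)) fuel t s w cost).2%:R <=
    cost%:R + (114 * M)%:R * w%:R / (1 - rho) :> R)%R.
Proof.
have d0 : (0 < 1 - rho)%R by rewrite subr_gt0.
have hpos : forall w, (0 <= (114 * M)%:R * w%:R / (1 - rho) :> R)%R.
  by move=> w; rewrite divr_ge0 // ?mulr_ge0 // ltW.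
elim=> [|f IH] t s w cost sM wM /=; first by rewrite lerDl.
case: eqP => [_|/eqP w0] /=; first by rewrite lerDl.
have w0' : 0 < w by rewrite lt0n.
have [H1 H2] := round_bound q t s w M w0' wM sM.
move: H1 H2; case: (round q t s w) => [[s' t'] c] /= H1 H2.
set w' := Num.truncn (rho * w%:R).
have w'le : (w'%:R <= rho * w%:R :> R)%R by rewrite truncn_le mulr_ge0.
have w'w : w' <= w.
  rewrite -(ler_nat R); apply: le_trans w'le _.
  by rewrite ler_piMl // ltW.
apply: le_trans (IH t' s' w' (cost + c) (leq_trans H1 sM) (leq_trans w'w wM)) _.
rewrite natrD -addrA lerD2l.
have Hc : (c%:R <= (114 * M)%:R * w%:R :> R)%R by rewrite -natrM ler_nat.
have E : (c%:R = c%:R * (1 - rho) / (1 - rho) :> R)%R by rewrite mulfK // gt_eqF.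
rewrite E -mulrDl ler_pM2r ?invr_gt0 //.
have A0 : (0 <= (114 * M)%:R :> R)%R by [].
set A := ((114 * M)%:R)%R in Hc A0 *.
nra.
Qed.

Local Open Scope ring_scope.

Theorem lemma5p1 (R : archiRealFieldType) :
  exists C : R, 0 < C /\
    forall (rho : R), 1 / 2 <= rho -> rho < 1 ->
    forall (T : Type) (q : nat -> T -> T -> bool) (S : seq T) (wS : R),
      1 <= wS -> wS <= (size S)%:R ->
      (basket_sort_time rho q S wS)%:R <= C * ((size S)%:R * wS / (1 - rho)).
Proof.
exists 114%:R; split => // rho h1 h2 T q S wS w1 wM.
have r0 : 0 <= rho by apply: le_trans h1; rewrite divr_ge0.
have wS0 : 0 <= wS by apply: le_trans w1.
have w0M : (Num.truncn wS <= size S)%N.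
  by rewrite -[X in (_ <= X)%N](@natrK R); apply: le_truncn.
rewrite /basket_sort_time /basket_sort.
have LB := (@loop_bound R rho r0 h2 T q (size S) (Num.truncn wS).+1 0 S (Num.truncn wS) 0 (leqnn _) w0M).
apply: le_trans LB _.
rewrite add0r natrM !mulrA -(mulrA 114%:R) ler_pM2r ?invr_gt0 ?subr_gt0 //.
rewrite -mulrA ler_pM2l // ler_pM2l ?ltr0n ?lt0n ?size_eq0; last first.
  by apply/eqP => S0; move: wM; rewrite S0 => /(le_trans w1); rewrite ler10.
by rewrite truncn_le.
Qed.
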